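(* Let $A$ be a unital power-associative algebra over a field $F$ of characteristic zero such that $A=F1\oplus N$ as vector spaces, where $N$ is a subalgebra in which every element is nilpotent. Then every Rota–Baxter operator $R$ of nonzero weight $\lambda$ on $A$ is splitting, and, up to replacing $R$ by $\phi(R)=-R-\lambda\,\mathrm{id}$, we have $R(1)=0$.
   Context: A linear operator $R\colon A\to A$ is a Rota–Baxter operator of weight $\lambda$ if $R(x)R(y)=R(R(x)y+xR(y)+\lambda xy)$ for all $x,y\in A$; then $\phi(R)=-R-\lambda\,\mathrm{id}$ is also an RB-operator of weight $\lambda$. An algebra is power-associative if every element generates an associative subalgebra. An RB-operator $R$ of weight $\lambda$ is splitting if $A=A_1\oplus A_2$ as vector spaces for subalgebras $A_1,A_2$ and $R(a_1+a_2)=-\lambda a_2$ for $a_1\in A_1,a_2\in A_2$. *)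

(* Defs.v *)
(* Not-necessarily-associative algebras over a field F are
   modelled as an lmodType F carrier together with a bilinear multiplication. *)
From HB Require Import structures.
From mathcomp Require Import all_boot all_order all_algebra.
Set Implicit Arguments. Unset Strict Implicit. Unset Printing Implicit Defensive.
Import Order.TTheory GRing.Theory Num.Theory.
Local Open Scope ring_scope.

Section NonAssoc.
Variables (F : fieldType) (A : lmodType F) (mul : A -> A -> A).

Definition bilinear_mul : Prop :=
  [/\ forall x y z, mul (x + y) z = mul x z + mul y z,
      forall x y z, mul x (y + z) = mul x y + mul x z,
      forall (k : F) x y, mul (k *: x) y = k *: mul x y
    & forall (k : F) x y, mul x (k *: y) = k *: mul x y].

Definition is_unit_elt (one : A) : Prop :=
  forall x, mul one x = x /\ mul x one = x.

Inductive gen_subalg (x : A) : A -> Prop :=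
  | gen_base : gen_subalg x x
  | gen_zero : gen_subalg x 0
  | gen_add a b : gen_subalg x a -> gen_subalg x b -> gen_subalg x (a + b)
  | gen_scale (k : F) a : gen_subalg x a -> gen_subalg x (k *: a)
  | gen_mul a b : gen_subalg x a -> gen_subalg x b -> gen_subalg x (mul a b).

Definition power_associative : Prop :=
  forall x a b c, gen_subalg x a -> gen_subalg x b -> gen_subalg x c ->
    mul (mul a b) c = mul a (mul b c).

(* npow x n = x^(n+1), left-normed *)
Fixpoint npow (x : A) (n : nat) : A :=
  match n with 0%N => x | n'.+1 => mul (npow x n') x end.

Definition nilpotent_elt (x : A) : Prop := exists n, npow x n = 0.

Definition subalgebra (S : A -> Prop) : Prop :=
  [/\ S 0, forall x y, S x -> S y -> S (x + y),
      forall (k : F) x, S x -> S (k *: x)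
    & forall x y, S x -> S y -> S (mul x y)].

Definition vs_direct_sum (S1 S2 : A -> Prop) : Prop :=
  (forall a, exists a1 a2, [/\ S1 a1, S2 a2 & a = a1 + a2]) /\
  (forall a, S1 a -> S2 a -> a = 0).

Definition linear_op (R : A -> A) : Prop :=
  forall (k : F) x y, R (k *: x + y) = k *: R x + R y.

Definition rota_baxter (lam : F) (R : A -> A) : Prop :=
  linear_op R /\
  forall x y, mul (R x) (R y) = R (mul (R x) y + mul x (R y) + lam *: mul x y).

Definition phi_op (lam : F) (R : A -> A) : A -> A := fun x => - R x - lam *: x.

Definition splitting_op (lam : F) (R : A -> A) : Prop :=
  exists A1 A2 : A -> Prop,
    [/\ subalgebra A1, subalgebra A2, vs_direct_sum A1 A2 &
        forall a1 a2, A1 a1 -> A2 a2 -> R (a1 + a2) = - (lam *: a2)].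

End NonAssoc.

(* Main.v *)
Require Import Defs.
From HB Require Import structures.
From mathcomp Require Import all_boot all_order all_algebra.
From mathcomp Require Import zify.
Import GRing.Theory.
Set Implicit Arguments. Unset Strict Implicit.
Local Open Scope ring_scope.

Section Aux.
Variables (F : fieldType) (A : lmodType F) (mul : A -> A -> A).
Hypothesis Hb : bilinear_mul mul.

Lemma mDl x y z : mul (x + y) z = mul x z + mul y z. Proof. by case: Hb. Qed.
Lemma mDr x y z : mul x (y + z) = mul x y + mul x z. Proof. by case: Hb. Qed.
Lemma mZl k x y : mul (k *: x) y = k *: mul x y. Proof. by case: Hb. Qed.
Lemma mZr k x y : mul x (k *: y) = k *: mul x y. Proof. by case: Hb. Qed.
Lemma m0l y : mul 0 y = 0. Proof. by have := mZl 0 0 y; rewrite !scale0r. Qed.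
Lemma m0r y : mul y 0 = 0. Proof. by have := mZr 0 y 0; rewrite !scale0r. Qed.
Lemma mNl x y : mul (- x) y = - mul x y.
Proof. by rewrite -scaleN1r mZl scaleN1r. Qed.
Lemma mNr x y : mul y (- x) = - mul y x.
Proof. by rewrite -scaleN1r mZr scaleN1r. Qed.
Lemma mBl x y z : mul (x - y) z = mul x z - mul y z. Proof. by rewrite mDl mNl. Qed.
Lemma mBr x y z : mul z (x - y) = mul z x - mul z y. Proof. by rewrite mDr mNr. Qed.

Section Lin.
Variable T : A -> A.
Hypothesis HT : linear_op T.
Lemma TD x y : T (x + y) = T x + T y.
Proof. by have := HT 1 x y; rewrite !scale1r. Qed.
Lemma T0 : T 0 = 0.
Proof.
have h := TD 0 0; rewrite addr0 in h.
by apply: (@addrI _ (T 0)); rewrite addr0 -h.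
Qed.
Lemma TZ k x : T (k *: x) = k *: T x.
Proof. by have := HT k x 0; rewrite addr0 T0 addr0. Qed.
Lemma TN x : T (- x) = - T x.
Proof. by rewrite -scaleN1r TZ scaleN1r. Qed.
Lemma TB x y : T (x - y) = T x - T y.
Proof. by rewrite TD TN. Qed.
End Lin.

Lemma npow_gen x k : gen_subalg mul x (npow mul x k).
Proof. elim: k => [|k IH] /=; [exact: gen_base | exact: gen_mul IH (gen_base _ _)]. Qed.

Lemma npowD (PA : power_associative mul) x i j :
  mul (npow mul x i) (npow mul x j) = npow mul x (i + j).+1.
Proof.
elim: j => [|j IH] /=; first by rewrite addn0.
rewrite -(PA _ _ _ _ (npow_gen x i) (npow_gen x j) (gen_base _ x)).
by rewrite IH addnS.
Qed.

Lemma npow_zero n m d : npow mul n m = 0 -> npow mul n (m + d) = 0.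
Proof. by move=> h; elim: d => [|d IH]; rewrite ?addn0 // addnS /= IH m0l. Qed.

Lemma npowZ s n j : npow mul (s *: n) j = (s ^+ j.+1) *: npow mul n j.
Proof.
elim: j => [|j IH] /=. by rewrite expr1.
by rewrite IH mZl mZr scalerA -exprSr.
Qed.

Lemma sq_step (one p : A) : is_unit_elt mul one ->
  (one - p) + (one - p) + (-1) *: mul (one - p) (one - p) = one - mul p p.
Proof.
move=> U.
rewrite mBl mBr mBr (proj1 (U _)) (proj1 (U _)) (proj2 (U _)) scaleN1r.
rewrite !opprB.
rewrite [p - one]addrC addrACA [- one + p]addrC -[p - one]opprB subrr addr0.
by rewrite addrA subrK.
Qed.

Lemma gen1 (S : A -> Prop) (one : A) (k c : F) (n : A) (m : nat) :
  is_unit_elt mul one -> power_associative mul -> subalgebra mul S ->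
  S (k *: one + c *: n) -> k != 0 -> npow mul n m = 0 -> S one.
Proof.
move=> U PA HS Sb k0 nm; case: HS => S0 SD SZ SM.
have step p : S (one - p) -> S (one - mul p p).
  by move=> h; rewrite -(sq_step p U); apply: (SD); [apply: (SD) | apply: (SZ); apply: (SM)].
pose p0 := (- (k^-1 * c)) *: n.
have h0 : S (one - p0).
  have -> : one - p0 = k^-1 *: (k *: one + c *: n).
    by rewrite scalerDr !scalerA mulVf // scale1r /p0 scaleNr opprK.
  exact: SZ.
pose P j := iter j (fun p => mul p p) p0.
have SP j : S (one - P j) by elim: j => [|j IH] //=; apply: step.
have EP j : exists s, P j = s *: npow mul n (2 ^ j - 1).
  elim: j => [|j [s IH]]; first by exists (- (k^-1 * c)).
  exists (s * s); rewrite /= -/(P j) IH mZl mZr scalerA npowD //.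
  congr (_ *: npow _ _ _); rewrite expnS; have := expn_gt0 2 j; lia.
have [s Es] := EP m.
have hm : (2 ^ m - 1 = m + (2 ^ m - 1 - m))%N.
  have := ltn_expl m (ltnSn 1); lia.
by have := SP m; rewrite Es hm npow_zero // scaler0 subr0.
Qed.

Section RB.
Variables (lam : F) (T : A -> A).
Hypothesis HR : rota_baxter mul lam T.
Let HT : linear_op T := proj1 HR.
Let RBe : forall x y, mul (T x) (T y) = T (mul (T x) y + mul x (T y) + lam *: mul x y)
  := proj2 HR.

Lemma imT_sub : subalgebra mul (fun y => exists x, y = T x).
Proof.
split.
- by exists 0; rewrite (T0 HT).
- by move=> _ _ [a ->] [b ->]; exists (a + b); rewrite (TD HT).
- by move=> k _ [a ->]; exists (k *: a); rewrite (TZ HT).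
- by move=> _ _ [a ->] [b ->]; eexists; apply: RBe.
Qed.

Lemma phi_rb : rota_baxter mul lam (phi_op lam T).
Proof.
split.
  move=> k x y; rewrite /phi_op HT scalerBr !scalerN scalerDr (scalerA lam k) (scalerA k lam) mulrC.
  by rewrite !opprD addrACA.
move=> x y.
have eP v : phi_op lam T v = -(T v + lam *: v) by rewrite /phi_op opprD.
rewrite !eP !mNl !mNr opprK.
set X := mul (T x) y + mul x (T y) + lam *: mul x y.
have eX : mul (T x + lam *: x) y + mul x (T y + lam *: y) - lam *: mul x y = X.
  by rewrite mDl mDr mZl mZr addrA addrK addrAC.
have -> : - mul (T x + lam *: x) y - mul x (T y + lam *: y) + lam *: mul x y = - X.
  by rewrite -eX !opprD opprK.
rewrite (TN HT) scalerN -opprD opprK.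
rewrite mDl !mDr !mZl !mZr -/X RBe -/X scalerDr scalerDr.
by rewrite -!addrA.
Qed.

Lemma F1 (one x z : A) : is_unit_elt mul one ->
  T x = one -> T z + lam *: z = one -> one = 0.
Proof.
move=> U hx hz.
have h := RBe x z.
rewrite hx (proj1 (U _)) (proj1 (U _)) -addrA -mZr -mDr hz (proj2 (U _)) (TD HT) in h.
have : T z + T x = T z + 0 by rewrite addr0 -h.
by move/addrI; rewrite hx.
Qed.

Lemma F2 (one z : A) (m : nat) : is_unit_elt mul one ->
  T z + lam *: z = one -> npow mul (T z) m = 0 -> T one = 0.
Proof.
move=> U hz hm.
set w := T z in hz hm *.
pose K u := T u = - (lam *: u).
have ew : w = one - lam *: z by rewrite -hz addrK.
have base : T (mul z w) = - (lam *: mul z w).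
  have h := RBe z z; rewrite -/w in h.
  rewrite {1 3}ew mBl mBl mZl mZl (proj1 (U _)) (proj1 (U _)) in h.
  rewrite addrAC subrK (TD HT) in h.
  by move/addrI: h => <-.
have KZ k u : K u -> K (k *: u).
  by rewrite /K => h; rewrite (TZ HT) h scalerN !scalerA mulrC.
have KD u v : K u -> K v -> K (u + v).
  by rewrite /K => hu hv; rewrite (TD HT) hu hv scalerDr opprD.
have Kw u : K u -> K (mul u w).
  rewrite /K => h; have h2 := RBe u z; rewrite -/w h !mNl !mZl in h2.
  by rewrite addrAC addNr add0r in h2; rewrite -h2.
have D k : K (npow mul w k - npow mul w k.+1).
  elim: k => [|k IH].
    have -> : npow mul w 0 - npow mul w 1 = lam *: mul z w.
      have ez : lam *: z = one - w by rewrite -hz [w + _]addrC addrK.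
      by rewrite -mZl ez mBl (proj1 (U _)).
    exact: KZ.
  have -> : npow mul w k.+1 - npow mul w k.+2 = mul (npow mul w k - npow mul w k.+1) w.
    by rewrite mBl.
  exact: Kw.
have E k : K (w - npow mul w k).
  elim: k => [|k IH]; first by rewrite /K /= subrr (T0 HT) scaler0 oppr0.
  have -> : w - npow mul w k.+1 = (w - npow mul w k) + (npow mul w k - npow mul w k.+1).
    by rewrite addrA subrK.
  exact: KD.
have Kw0 : K w by have := E m; rewrite hm subr0.
by rewrite -hz (TD HT) (TZ HT) -/w Kw0 addNr.
Qed.
End RB.

Lemma key (one : A) (N : A -> Prop) lam T :
  is_unit_elt mul one -> power_associative mul ->
  (forall n, N n -> nilpotent_elt mul n) ->
  vs_direct_sum (fun a => exists k : F, a = k *: one) N ->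
  rota_baxter mul lam T ->
  (exists z, T z + lam *: z = one) -> T one = 0 \/ one = 0.
Proof.
move=> U PA Nn [Dec _] HR [z hz].
have [a1 [a2 [[g ea1] Na2 e]]] := Dec (T z).
have [m hm] := Nn _ Na2.
case: (eqVneq g 0) => [g0 | g0].
  left; apply: (@F2 lam T HR one z m U hz); by rewrite -hm e ea1 g0 scale0r add0r.
right; have [x hx] : exists x, one = T x.
  apply: (@gen1 (fun y => exists x, y = T x) one g 1 a2 m U PA (imT_sub HR)) => //.
  by exists z; rewrite scale1r -ea1 -e.
exact: (F1 HR U (esym hx) hz).
Qed.
End Aux.

Unset Implicit Arguments.
Unset Strict Implicit.

Theorem theorem9 (F : fieldType) (A : lmodType F) (mul : A -> A -> A) (one : A)
  (N : A -> Prop) (lam : F) (R : A -> A) :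
  [pchar F] =i pred0 ->
  bilinear_mul mul ->
  is_unit_elt mul one ->
  power_associative mul ->
  subalgebra mul N ->
  (forall n, N n -> nilpotent_elt mul n) ->
  vs_direct_sum (fun a => exists k : F, a = k *: one) N ->
  lam != 0 ->
  rota_baxter mul lam R ->
  splitting_op mul lam R /\ (R one = 0 \/ phi_op lam R one = 0).
Proof.
move=> _ Hb U PA NS Nn Dec l0 HR.
have HT := proj1 HR.
have RBe := proj2 HR.
have Hone : R one = 0 \/ phi_op lam R one = 0.
  have triv : one = 0 -> R one = 0 by move->; exact: T0 HT.
  have [a1 [a2 [[al ea1] Na2 e]]] := proj1 Dec (R one).
  have [m hm] := Nn _ Na2.
  case: (eqVneq (al + lam) 0) => [h | h].
  - have al0 : al != 0.
      have -> : al = - lam by apply/eqP; rewrite -addr_eq0 h.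
      by rewrite oppr_eq0.
    have [x hx] : exists x, one = R x.
      apply: (@gen1 F A mul Hb (fun y => exists x, y = R x) one al 1 a2 m U PA (imT_sub HR)) => //.
      by exists one; rewrite scale1r -ea1 -e.
    have ez : phi_op lam R (-x) + lam *: -x = one.
      by rewrite /phi_op (TN HT) opprK subrK hx.
    have [H|H] := key Hb U PA Nn Dec (phi_rb Hb HR) (ex_intro _ (-x) ez).
    + by right.
    + by left; apply: triv.
  - have [x hx] : exists x, one = phi_op lam R x.
      apply: (@gen1 F A mul Hb (fun y => exists x, y = phi_op lam R x) one (-(al+lam)) (-1) a2 m U PA
                (imT_sub (phi_rb Hb HR))) => //.
        exists one; rewrite /phi_op e ea1 scaleN1r scaleNr scalerDl !opprD.
        by rewrite addrAC.
      by rewrite oppr_eq0.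
    have ez : R (-x) + lam *: -x = one.
      by rewrite (TN HT) scalerN hx.
    have [H|H] := key Hb U PA Nn Dec HR (ex_intro _ (-x) ez).
    + by left.
    + by left; apply: triv.
have RR x : R (R x + lam *: x) = 0.
  have h2 := RBe x one; rewrite !(proj2 (U _)) in h2.
  case: Hone => h.
    by rewrite h !(m0r Hb) addr0 in h2; rewrite -h2.
  have e1 : R one = - (lam *: one).
    by move/eqP: h; rewrite subr_eq0 => /eqP <-; rewrite opprK.
  rewrite e1 !(mNr Hb) !(mZr Hb) !(proj2 (U _)) subrK in h2.
  by rewrite (TD HT) (TZ HT) -h2 addNr.
have RR2 x : R (R x) = - (lam *: R x).
  by apply/eqP; rewrite -addr_eq0 -(TZ HT) -(TD HT) RR.
split=> //.
exists (fun a => R a = 0), (fun a => R a = - (lam *: a)); split.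
- split.
  + exact: T0 HT.
  + by move=> x y hx hy; rewrite (TD HT) hx hy addr0.
  + by move=> k x hx; rewrite (TZ HT) hx scaler0.
  + move=> x y hx hy; have h := RBe x y.
    rewrite hx hy !(m0l Hb) !(m0r Hb) !add0r (TZ HT) in h.
    by move/eqP: h; rewrite eq_sym scaler_eq0 (negbTE l0) => /eqP.
- split.
  + by rewrite (T0 HT) scaler0 oppr0.
  + by move=> x y hx hy; rewrite (TD HT) hx hy scalerDr opprD.
  + by move=> k x hx; rewrite (TZ HT) hx scalerN !scalerA mulrC.
  + move=> x y hx hy; have h := RBe x y.
    rewrite hx hy !(mNl Hb) !(mNr Hb) !(mZl Hb) !(mZr Hb) opprK in h.
    rewrite -addrA addNr addr0 (TN HT) (TZ HT) in h.
    apply: (scalerI l0); rewrite scalerN h.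
    by rewrite opprK.
- split.
  + move=> a; exists (lam^-1 *: (R a + lam *: a)), (- (lam^-1 *: R a)); split.
    * by rewrite (TZ HT) RR scaler0.
    * rewrite (TN HT) (TZ HT) RR2 scalerN opprK !scalerN opprK scalerA mulVf //.
      by rewrite scalerA mulfV // scale1r.
    * by rewrite scalerDr scalerA mulVf // scale1r addrAC subrr add0r.
  + move=> a h1 h2; move: h2; rewrite h1 => /eqP; rewrite eq_sym oppr_eq0 scaler_eq0.
    by rewrite (negbTE l0) => /eqP.
- by move=> a1 a2 h1 h2; rewrite (TD HT) h1 h2 add0r.
Qed.
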